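(* Let $q\ge 2$, and let $\mathcal{C}\subseteq \Sigma^n$ be a code over an alphabet $\Sigma$ of size $q$ with $|\mathcal{C}|=q^k$ and locality $r$. Suppose $s:=n \bmod (r+1)\notin\{0,1\}$, and let $m:=\lceil n/(r+1)\rceil$. Suppose $\mathcal{C}$ has $m$ pairwise disjoint repair groups $A_1,\dots,A_m\subseteq\{1,\dots,n\}$ with $|A_i|=r+1$ for $i=1,\dots,m-1$ and $|A_m|=s$. If either $r\mid k$, or $r\nmid k$ and $k \bmod r\ge s$, then the minimum Hamming distance of $\mathcal{C}$ satisfies $$d_{\min}(\mathcal{C})\le n-k-\Big\lceil\frac{k}{r}\Big\rceil+1.$$
   Context: A code $\mathcal{C}$ of length $n$ has locality $r$ if for every coordinate $i\in\{1,\dots,n\}$ there is a set $I_i\subseteq\{1,\dots,n\}\setminus\{i\}$ with $|I_i|=r$ such that for every codeword $c=(c_1,\dots,c_n)\in\mathcal{C}$, $c_i$ is a function of $(c_l)_{l\in I_i}$; such a code with $|\mathcal{C}|=q^k$ is called an $(n,k,r)$ LRC code. A repair group is a subset $A\subseteq\{1,\dots,n\}$ such that for every $j\in A$ and every codeword $c$, the coordinate $c_j$ is a function of $(c_l)_{l\in A\setminus\{j\}}$. *)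

(* Defs.v *)
From mathcomp Require Import all_boot all_order.
Set Implicit Arguments. Unset Strict Implicit. Unset Printing Implicit Defensive.

(* Codes of length n over a finite alphabet Sigma: sets of words 'I_n -> Sigma.
   Coordinates are indexed 0..n-1 (the paper's 1..n). *)

Definition determined_by (Sigma : finType) (n : nat)
  (C : {set {ffun 'I_n -> Sigma}}) (I : {set 'I_n}) (i : 'I_n) : Prop :=
  forall c c', c \in C -> c' \in C -> (forall l, l \in I -> c l = c' l) -> c i = c' i.

Definition has_locality (Sigma : finType) (n : nat)
  (C : {set {ffun 'I_n -> Sigma}}) (r : nat) : Prop :=
  forall i : 'I_n, exists I : {set 'I_n},
    [/\ i \notin I, #|I| = r & determined_by C I i].

Definition repair_group (Sigma : finType) (n : nat)
  (C : {set {ffun 'I_n -> Sigma}}) (A : {set 'I_n}) : Prop :=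
  forall j, j \in A -> determined_by C (A :\ j) j.

Definition hamming (Sigma : finType) (n : nat) (x y : {ffun 'I_n -> Sigma}) : nat :=
  #|[set i | x i != y i]|.

(* Minimum Hamming distance: min over ordered pairs of distinct codewords.
   The default value n of the min is harmless since every distance is <= n;
   it is only meaningful for |C| >= 2. *)
Definition dmin (Sigma : finType) (n : nat) (C : {set {ffun 'I_n -> Sigma}}) : nat :=
  \big[minn/n]_(x in C) \big[minn/n]_(y in C | y != x) hamming x y.

(* Main.v *)
Require Import Defs.
From mathcomp Require Import all_boot all_order all_algebra zify.
Import GRing.Theory Num.Theory.
Set Implicit Arguments. Unset Strict Implicit. Unset Printing Implicit Defensive.
Lemma image_le (T U V : finType) (D : {set T}) (f : T -> U) (g : T -> V) :
  {in D &, forall x y, f x = f y -> g x = g y} -> #|g @: D| <= #|f @: D|.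
Proof.
move=> H; case: (set_0Vmem D) => [->|[x0 x0D]]; first by rewrite !imset0 cards0.
pose h u := g (odflt x0 [pick x in D | f x == u]).
apply: (leq_trans _ (leq_imset_card h _)); apply: subset_leq_card.
apply/subsetP => _ /imsetP[x xD ->]; apply/imsetP; exists (f x); first exact: imset_f.
rewrite /h; case: pickP => [y /andP[yD /eqP fy]|/(_ x)]; last by rewrite xD eqxx.
by apply: H.
Qed.

Lemma subset_of_card (T : finType) (B : {set T}) x : x <= #|B| ->
  exists X : {set T}, X \subset B /\ #|X| = x.
Proof.
elim: x => [|x IH] lt; first by exists set0; rewrite sub0set cards0.
have [X [XB cX]] := IH (ltnW lt).
have : X \proper B by rewrite properEcard XB cX.
case/properP => _ [y yB yX]; exists (y |: X); split.
  by rewrite subUset sub1set yB XB.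
by rewrite cardsU1 yX cX.
Qed.

Section N.
Variables (Sigma : finType) (n : nat) (C : {set {ffun 'I_n -> Sigma}}).

Definition proj (T : {set 'I_n}) (c : {ffun 'I_n -> Sigma}) : {ffun 'I_n -> option Sigma} :=
  [ffun i => if i \in T then Some (c i) else None].
Definition N T := #|proj T @: C|.

Lemma projP T c c' : proj T c = proj T c' <-> (forall i, i \in T -> c i = c' i).
Proof.
split=> [E i iT|E].
  by move/ffunP/(_ i): E; rewrite !ffunE iT => -[].
by apply/ffunP => i; rewrite !ffunE; case: ifP => // /E ->.
Qed.

Lemma N_union (A B : {set 'I_n}) : N (A :|: B) <= N A * N B.
Proof.
rewrite /N -cardsX.
apply: (leq_trans (image_le (f := fun c => (proj A c, proj B c)) _)).
  move=> c c' _ _ [/projP EA /projP EB]; apply/projP => i.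
  by rewrite in_setU => /orP[/EA|/EB].
apply: subset_leq_card; apply/subsetP => _ /imsetP[c cC ->].
by rewrite in_setX !imset_f.
Qed.

Lemma N_sub (A B : {set 'I_n}) : A \subset B -> N A <= N B.
Proof.
move=> /subsetP AB; rewrite /N; apply: image_le => c c' _ _ /projP E; apply/projP => i /AB; exact: E.
Qed.

Lemma N_repair (A : {set 'I_n}) j : j \in A -> determined_by C (A :\ j) j -> N A <= N (A :\ j).
Proof.
move=> jA D; rewrite /N; apply: image_le => c c' cC c'C /projP E; apply/projP => i iA.
case: (eqVneq i j) => [->|ij]; first exact: D.
by apply: E; rewrite in_setD1 ij.
Qed.

Lemma N_pow k (T : {set 'I_n}) : #|T| = k -> N T <= #|Sigma| ^ k.
Proof.
elim: k T => [|k IH] T cT.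
  move/eqP: cT; rewrite cards_eq0 => /eqP ->.
  rewrite /N; apply: (leq_trans (image_le (f := fun _ => tt) _)); first by move=> c c' _ _ _; apply/projP => i; rewrite inE.
  by rewrite expn0 -(card_unit); apply: max_card.
have [i iT] : exists i, i \in T by apply/set0Pn; rewrite -card_gt0 cT.
rewrite -(setD1K iT) expnS; apply: (leq_trans (N_union _ _)); apply: leq_mul.
  rewrite /N; apply: (@leq_trans #|(fun c : {ffun 'I_n -> Sigma} => c i) @: C|); first apply: image_le.
    by move=> c c' _ _ E; apply/projP => j; rewrite in_set1 => /eqP ->.
  exact: max_card.
by apply: IH; move: cT; rewrite (cardsD1 i) iT => -[].
Qed.

Lemma N_group (A : {set 'I_n}) : repair_group C A -> 0 < #|A| -> N A <= #|Sigma| ^ (#|A|.-1).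
Proof.
move=> R; rewrite card_gt0 => /set0Pn[j jA].
apply: (leq_trans (N_repair jA (R j jA))); apply: N_pow.
by rewrite (cardsD1 j A) jA.
Qed.

Lemma N_setT : N setT = #|C|.
Proof. by apply: card_in_imset => c c' _ _ /projP E; apply/ffunP => i; apply: E. Qed.

Lemma agree (T : {set 'I_n}) : N T < #|C| ->
  exists c c', [/\ c \in C, c' \in C, c' != c & forall i, i \in T -> c i = c' i].
Proof.
move=> lt.
case: (boolP [exists c in C, exists c' in C, (c' != c) && [forall i in T, c i == c' i]]).
  case/exists_inP => c cC /exists_inP[c' c'C /andP[ne /forall_inP E]].
  by exists c, c'; split=> // i /E /eqP.
move=> H; exfalso; move: lt; rewrite /N card_in_imset ?ltnn // => c c' cC c'C /projP E.
apply/eqP; apply: contraR H => ne; apply/exists_inP; exists c' => //.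
apply/exists_inP; exists c => //; rewrite ne; apply/forall_inP => i /E ->. done.
Qed.

Lemma bigmin_le (I : eqType) (s : seq I) (P : pred I) F x d :
  x \in s -> P x -> \big[minn/d]_(i <- s | P i) F i <= F x.
Proof.
elim: s => // y s IH; rewrite in_cons big_cons => /orP[/eqP<- ->|xs Px].
  exact: geq_minl.
case: ifP => _; last exact: IH.
by apply: leq_trans (geq_minr _ _) (IH xs Px).
Qed.

Lemma dmin_le (T : {set 'I_n}) c c' : c \in C -> c' \in C -> c' != c ->
  (forall i, i \in T -> c i = c' i) -> dmin C <= n - #|T|.
Proof.
move=> cC c'C ne E; rewrite /dmin.
apply: (leq_trans (bigmin_le _ _ (x := c) _ _)); rewrite ?mem_index_enum //.
apply: (leq_trans (bigmin_le _ _ (x := c') _ _)); rewrite ?mem_index_enum ?c'C ?ne //.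
have -> : n - #|T| = #|~: T| by rewrite -{1}(card_ord n) -(cardsC T) addKn. apply: subset_leq_card.
apply/subsetP => i; rewrite !inE; apply: contra => iT; apply/eqP; exact: E.
Qed.

End N.
Unset Implicit Arguments.

Theorem theorem2 (Sigma : finType) (q n k r : nat)
  (C : {set {ffun 'I_n -> Sigma}}) (m : nat) (A : 'I_m -> {set 'I_n}) :
  2 <= q -> #|Sigma| = q ->
  #|C| = q ^ k -> 0 < k ->
  has_locality C r ->
  n %% r.+1 != 0 -> n %% r.+1 != 1 ->
  m = divn (n + r) r.+1 ->
  (forall i, repair_group C (A i)) ->
  (forall i j, i != j -> [disjoint A i & A j]) ->
  (forall i : 'I_m, i.+1 < m -> #|A i| = r.+1) ->
  (forall i : 'I_m, i.+1 = m -> #|A i| = n %% r.+1) ->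
  (r %| k \/ (~~ (r %| k) /\ n %% r.+1 <= k %% r)) ->
  ((dmin C)%:Z <= (n%:Z - k%:Z - (divn (k + r.-1) r)%:Z + 1)%R)%R.
Proof.
move=> q2 cS cC k0 _ s0 s1 hm rep disj full lastc cases.
have slt : n %% r.+1 < r.+1 by rewrite ltn_pmod.
set s := n %% r.+1 in s0 s1 lastc cases slt.
have s2 : 2 <= s by lia.
have hnd := divn_eq n r.+1; rewrite -/s in hnd.
set Q := n %/ r.+1 in hnd.
have hQ : m = Q.+1.
  rewrite hm hnd.
  have -> : Q * r.+1 + s + r = Q.+1 * r.+1 + s.-1.
    rewrite mulSn; move: (Q * r.+1) => P; lia.
  by rewrite divnMDl // divn_small ?addn0 //; lia.
move: A rep disj full lastc; rewrite hQ; clear hm hQ => A rep disj full lastc.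
pose L := A ord_max.
pose G (i : nat) := A (inord i).
have cardL : #|L| = s by apply: lastc.
have cardG : forall i, i < Q -> #|G i| = r.+1.
  by move=> i iQ; apply: full; rewrite inordK; lia.
have disjLG : forall i, i < Q -> [disjoint L & G i].
  move=> i iQ; apply: disj; apply/eqP => /(congr1 val) /=; rewrite inordK; lia.
have disjGG : forall i j, i < j -> j < Q -> [disjoint G i & G j].
  move=> i j ij jQ; apply: disj; apply/eqP => /(congr1 val) /=; rewrite !inordK; lia.
pose T (j : nat) := L :|: \bigcup_(i < j) G i.
have dTG : forall j, j < Q -> T j :&: G j = set0.
  move=> j jQ; apply/setP => y; rewrite !inE; apply/negP => /andP[/orP[yL|/bigcupP[i _ yi]] yG].
    by rewrite (disjointFr (disjLG j jQ) yL) in yG.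
  by rewrite (disjointFr (disjGG i j (ltn_ord i) jQ) yi) in yG.
have ind : forall j, j <= Q -> N C (T j) <= q ^ (s.-1 + j * r) /\ #|T j| = s + j * r.+1.
  elim => [_|j IH jQ].
    rewrite /T big_ord0 setU0 !mul0n !addn0 cardL; split => //.
    rewrite -cS -cardL; apply: N_group; [exact: rep | rewrite cardL; lia].
  have [IH1 IH2] := IH (ltnW jQ).
  have -> : T j.+1 = T j :|: G j by rewrite /T big_ord_recr /= setUA.
  split.
    apply: (leq_trans (N_union _ _ _)).
    rewrite mulSn addnCA expnD mulnC; apply: leq_mul => //.
    rewrite -cS; have <- : (#|G j|).-1 = r by rewrite cardG.
    by apply: N_group; [exact: rep | rewrite cardG].
  by rewrite cardsU dTG // cards0 subn0 IH2 cardG // mulSn; lia.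
have core : forall b x, s + b * r + x = k -> x <= r ->
    dmin C <= n - (k + b) /\ k + b <= n.
  move=> b x hk xr.
  have bQ : b < Q.
    rewrite ltnNge; apply/negP => Qb.
    have [I1 I2] := ind Q (leqnn Q).
    have TQ : T Q = setT.
      by apply/eqP; rewrite eqEcard subsetT cardsT card_ord I2 hnd; lia.
    rewrite TQ N_setT cC -cS leq_exp2l ?cS // in I1.
    have : Q * r <= b * r by rewrite leq_mul2r Qb orbT.
    move: (Q * r) (b * r) I1 hk => P P'; lia.
  have [I1 I2] := ind b (ltnW bQ).
  have [X [XG cX]] : exists X : {set 'I_n}, X \subset G b /\ #|X| = x.
    by apply: subset_of_card; rewrite cardG //; lia.
  have cT' : #|T b :|: X| = k + b.
    rewrite cardsU I2 cX.
    have -> : T b :&: X = set0.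
      apply/eqP; rewrite -subset0 -(dTG b bQ); exact: setIS.
    rewrite cards0 subn0 mulnS; lia.
  have NT' : N C (T b :|: X) < #|C|.
    apply: (leq_ltn_trans (N_union _ _ _)).
    apply: (leq_ltn_trans (leq_mul I1 (N_pow C cX))).
    rewrite cS cC -expnD ltn_exp2l //; lia.
  have [c [c' [cC' c'C ne E]]] := agree NT'.
  split; last by rewrite -cT'; apply: leq_trans (max_card _) _; rewrite card_ord.
  by rewrite -cT'; exact: dmin_le cC' c'C ne E.
case: cases => [/dvdnP[a ha]|[nd st]].
  have a0 : 0 < a by move: k0; rewrite ha muln_gt0 => /andP[].
  have hk : s + a.-1 * r + (r - s) = k.
    rewrite ha; case: (a) a0 => // a' _ /=; rewrite mulSn; move: (a' * r) => P; lia.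
  have [h1 h2] := core a.-1 (r - s) hk ltac:(lia).
  have -> : (k + r.-1) %/ r = a.
    by rewrite ha divnMDl ?divn_small ?addn0; lia.
  lia.
have ht := divn_eq k r.
have tr : k %% r < r by rewrite ltn_pmod; lia.
have t0 : 0 < k %% r by move: nd; rewrite /dvdn lt0n.
move: (k %/ r) (k %% r) ht tr t0 st => a t ht tr t0 st.
have [h1 h2] := core a (t - s) ltac:(lia) ltac:(lia).
have -> : (k + r.-1) %/ r = a.+1.
  have -> : k + r.-1 = a.+1 * r + t.-1 by rewrite ht mulSn; move: (a * r) => P; lia.
  by rewrite divnMDl ?divn_small ?addn0; lia.
lia.
Qed.
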